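(* In the game described in the context, let $\mu\in\Pi_1^{SD}$ and $\nu\in\Pi_2^{SD}$ be essentially proper. Then (i) the pair $(\mu,\nu)$ is non-prolonging; and (ii) $\bar x(\mu)\ge\tilde x(\nu)$ componentwise, where $\bar x(\mu)$ and $\tilde x(\nu)$ are the unique solutions of $x=T_\mu x$ and $x=\tilde T_\nu x$, respectively.
   Context: Game model. $S=\{1,\dots,n\}$, $S_o=S\cup\{0\}$, $0$ an absorbing cost-free termination state. At $i\in S$ player I picks $\bar u\in\bar U(i)$, player II picks $\bar v\in\bar V(i)$, where $\bar U(i),\bar V(i)$ are compact subsets of complete separable metric spaces; an expected cost $c_i(\bar u,\bar v)\in\mathbb{R}$ is incurred by player I (reward to player II) and the state moves to $j\in S_o$ with probability $p_{ij}(\bar u,\bar v)$. Standing assumption: for all $i,j\in S$, $p_{ij}$ is continuous on $\bar U(i)\times\bar V(i)$, and $c_i$ is lower semicontinuous in $\bar u$ for fixed $\bar v$ and upper semicontinuous in $\bar v$ for fixed $\bar u$. For policies $\pi_1,\pi_2$ (history-dependent randomized), $x_i(\pi_1,\pi_2)=\liminf_{t\to\infty}E_{\pi_1\pi_2}[\sum_{k=0}^tc_{i_k}(\bar u_k,\bar v_k)\mid i_0=i]$. $\Pi_1^{SD}=\{\mu:\mu(i)\in\bar U(i)\}$, $\Pi_2^{SD}=\{\nu:\nu(i)\in\bar V(i)\}$. With $c(\mu,\nu)_i=c_i(\mu(i),\nu(i))$ and $P(\mu,\nu)_{ij}=p_{ij}(\mu(i),\nu(i))$, $i,j\in S$: $T_{\mu\nu}x=c(\mu,\nu)+P(\mu,\nu)x$,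 $T_\mu x=\sup_{\nu\in\Pi_2^{SD}}T_{\mu\nu}x$, $\tilde T_\nu x=\inf_{\mu\in\Pi_1^{SD}}T_{\mu\nu}x$ (componentwise). A pair of policies is prolonging if for some initial state the termination state is, with positive probability, never reached; otherwise non-prolonging. Essentially proper: $\mu\in\Pi_1^{SD}$ is essentially proper if there is $\nu\in\Pi_2^{SD}$ with $(\mu,\nu)$ non-prolonging and every $\nu\in\Pi_2^{SD}$ with $(\mu,\nu)$ prolonging has $x_i(\mu,\nu)=-\infty$ for some $i$. $\nu\in\Pi_2^{SD}$ is essentially proper if there is $\mu\in\Pi_1^{SD}$ with $(\mu,\nu)$ non-prolonging and every $\mu$ with $(\mu,\nu)$ prolonging has $x_i(\mu,\nu)=+\infty$ for some $i$. For essentially proper $\mu$ (resp. $\nu$) the equation $x=T_\mu x$ (resp. $x=\tilde T_\nu x$) has a unique solution in $\mathbb{R}^n$. *)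

(* Defs.v *)
From HB Require Import structures.
From mathcomp Require Import all_boot all_order all_algebra.
From mathcomp Require Import all_classical all_reals all_analysis.
Set Implicit Arguments. Unset Strict Implicit. Unset Printing Implicit Defensive.
Import Order.TTheory GRing.Theory Num.Theory.
Import numFieldNormedType.Exports.
Local Open Scope classical_set_scope.
Local Open Scope ring_scope.

Definition separable_space (T : topologicalType) :=
  exists D : set T, countable D /\ closure D = setT.

Definition lsc_on (R : realType) (T : topologicalType) (A : set T) (f : T -> R) :=
  forall x, A x -> forall a : R, a < f x -> within A (nbhs x) (fun y => a < f y).
Definition usc_on (R : realType) (T : topologicalType) (A : set T) (f : T -> R) :=
  forall x, A x -> forall a : R, f x < a -> within A (nbhs x) (fun y => f y < a).

Section Game.
Local Unset Implicit Arguments.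
Variables (R : realType) (n : nat) (U V : 'I_n -> Type)
  (Ubar : forall i, set (U i)) (Vbar : forall i, set (V i))
  (c : forall i, U i -> V i -> R)
  (* p i u v (Some j) = p_ij, p i u v None = p_i0 (termination state 0) *)
  (p : forall i, U i -> V i -> option 'I_n -> R).
Local Set Implicit Arguments.

Definition Pi1SD (mu : forall i, U i) := forall i, Ubar i (mu i).
Definition Pi2SD (nu : forall i, V i) := forall i, Vbar i (nu i).

Definition cvec (mu : forall i, U i) (nu : forall i, V i) : 'I_n -> R :=
  fun i => c i (mu i) (nu i).
Definition Pm (mu : forall i, U i) (nu : forall i, V i) (i j : 'I_n) : R :=
  p i (mu i) (nu i) (Some j).
Definition Pop mu nu (x : 'I_n -> R) : 'I_n -> R :=
  fun i => \sum_(j < n) Pm mu nu i j * x j.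
Definition Tmn mu nu (x : 'I_n -> R) : 'I_n -> R :=
  fun i => cvec mu nu i + Pop mu nu x i.
Definition Tmu mu (x : 'I_n -> R) (i : 'I_n) : \bar R :=
  ereal_sup [set (Tmn mu nu x i)%:E | nu in Pi2SD].
Definition Tnu nu (x : 'I_n -> R) (i : 'I_n) : \bar R :=
  ereal_inf [set (Tmn mu nu x i)%:E | mu in Pi1SD].

(* E_{mu nu}[ c_{i_k} | i_0 = i ] = (P^k c)_i ;
   x_i(mu,nu) = liminf_t sum_{k=0}^t (P^k c)_i  in the extended reals *)
Definition cost mu nu (i : 'I_n) : \bar R :=
  limn_einf (fun t : nat =>
    (\sum_(k < t.+1) iter k (Pop mu nu) (cvec mu nu) i)%:E).

(* Probability, from i_0 = i, of not having reached 0 after k steps is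
   (P^k 1)_i; the probability of never reaching 0 is its (decreasing) limit.
   Prolonging: for some initial state this limit is positive. *)
Definition prolonging mu nu :=
  exists i : 'I_n, exists2 eps : R, 0 < eps &
    forall k, eps <= iter k (Pop mu nu) (fun _ => 1) i.

Definition ess_proper1 mu :=
  Pi1SD mu /\
  (exists2 nu, Pi2SD nu & ~ prolonging mu nu) /\
  (forall nu, Pi2SD nu -> prolonging mu nu -> exists i, cost mu nu i = -oo%E).

Definition ess_proper2 nu :=
  Pi2SD nu /\
  (exists2 mu, Pi1SD mu & ~ prolonging mu nu) /\
  (forall mu, Pi1SD mu -> prolonging mu nu -> exists i, cost mu nu i = +oo%E).

End Game.

(* Main.v *)
Require Import Defs.
From HB Require Import structures.
From mathcomp Require Import all_boot all_order all_algebra.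
From mathcomp Require Import all_classical all_reals all_analysis.
From mathcomp Require Import zify ring lra.
Import Order.TTheory GRing.Theory Num.Theory.
Import numFieldNormedType.Exports.
Local Open Scope classical_set_scope.
Local Open Scope ring_scope.
Set Implicit Arguments. Unset Strict Implicit. Unset Printing Implicit Defensive.

Section Gen.
Variables (R : realType) (n : nat) (A : 'I_n -> 'I_n -> R).
Hypothesis A0 : forall i j, 0 <= A i j.
Hypothesis A1 : forall i, \sum_(j < n) A i j <= 1.

Definition PG (x : 'I_n -> R) : 'I_n -> R := fun i => \sum_(j < n) A i j * x j.
Definition It k (x : 'I_n -> R) := iter k PG x.
Definition Ssum (c : 'I_n -> R) t : 'I_n -> R := fun i => \sum_(k < t) It k c i.
Definition one : 'I_n -> R := fun _ => 1.

Lemma PG_add x y : PG (fun j => x j + y j) = fun i => PG x i + PG y i.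
Proof. by apply: funext => i; rewrite /PG -big_split /=; apply: eq_bigr => j _; rewrite mulrDr. Qed.

Lemma PG_scal a x : PG (fun j => a * x j) = fun i => a * PG x i.
Proof. by apply: funext => i; rewrite /PG mulr_sumr; apply: eq_bigr => j _; rewrite mulrCA. Qed.

Lemma PG_mono x y : (forall j, x j <= y j) -> forall i, PG x i <= PG y i.
Proof. by move=> H i; apply: ler_sum => j _; apply: ler_wpM2l. Qed.

Lemma PG_one i : PG one i <= 1.
Proof. by rewrite /PG; under eq_bigr do rewrite /one mulr1; exact: A1. Qed.

Lemma It_add k x y : It k (fun j => x j + y j) = fun i => It k x i + It k y i.
Proof.
elim: k => [//|k IH]; rewrite /It !iterS -/(It k _) IH PG_add //.
Qed.

Lemma It_scal k a x : It k (fun j => a * x j) = fun i => a * It k x i.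
Proof. elim: k => [//|k IH]; by rewrite /It !iterS -/(It k _) IH PG_scal. Qed.

Lemma It_zero k : It k (fun _ => 0) = fun _ => 0.
Proof.
elim: k => [//|k IH]; rewrite /It iterS -/(It k _) IH.
by apply: funext => i; rewrite /PG big1 // => j _; rewrite mulr0.
Qed.

Lemma It_opp k x : It k (fun j => - x j) = fun i => - It k x i.
Proof.
have := It_scal k (-1) x; under eq_fun do rewrite mulN1r.
by move=> ->; apply: funext => i; rewrite mulN1r.
Qed.

Lemma It_sub k x y : It k (fun j => x j - y j) = fun i => It k x i - It k y i.
Proof. by rewrite It_add It_opp. Qed.

Lemma It_mono k x y : (forall j, x j <= y j) -> forall i, It k x i <= It k y i.
Proof.
elim: k x y => [//|k IH] x y H i; rewrite /It !iterS; apply: PG_mono => j; exact: IH.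
Qed.

Lemma It_sum k m (f : nat -> 'I_n -> R) :
  It k (fun j => \sum_(l < m) f l j) = fun i => \sum_(l < m) It k (f l) i.
Proof.
elim: m => [|m IH].
  by under eq_fun do rewrite big_ord0; rewrite It_zero; apply: funext => i; rewrite big_ord0.
under eq_fun do rewrite big_ord_recr /=.
by rewrite It_add IH; apply: funext => i; rewrite big_ord_recr.
Qed.

Lemma PG_ge0 x : (forall j, 0 <= x j) -> forall i, 0 <= PG x i.
Proof. by move=> H i; apply: sumr_ge0 => j _; apply: mulr_ge0. Qed.

Lemma It_ge0 k x : (forall j, 0 <= x j) -> forall i, 0 <= It k x i.
Proof. by move=> H i; have := @It_mono k (fun _ => 0) x H i; rewrite It_zero. Qed.

Lemma It_one_anti k i : It k.+1 one i <= It k one i.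
Proof.
by rewrite /It iterSr; apply: It_mono => j; exact: PG_one.
Qed.

Lemma It_one_le k i : It k one i <= 1.
Proof. elim: k => [|k IH]; first by rewrite /It /= /one. exact: le_trans (It_one_anti k i) IH. Qed.

Lemma It_one_anti2 k l i : (k <= l)%N -> It l one i <= It k one i.
Proof.
move=> /subnK <-; elim: (l - k)%N => [//|m IH]; rewrite addSn.
exact: le_trans (It_one_anti _ _) IH.
Qed.

Lemma It_bnd k x b : (forall j, x j <= b) -> forall i, It k x i <= b * It k one i.
Proof.
move=> H i; have H' : forall j, x j <= b * one j by move=> j; rewrite /one mulr1.
by have := @It_mono k x (fun j => b * one j) H' i; rewrite It_scal.
Qed.

Lemma Ssum_shift c K t i : Ssum c (K + t) i = Ssum c K i + It K (Ssum c t) i.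
Proof.
rewrite /Ssum big_split_ord /=; congr (_ + _).
rewrite It_sum; apply: eq_bigr => k _; by rewrite /It iterD.
Qed.

Lemma Ssum_rec c t i : Ssum c t.+1 i = c i + PG (Ssum c t) i.
Proof. by rewrite -add1n Ssum_shift /Ssum big_ord1 /It /=. Qed.

Lemma Ssum_one_le t i : Ssum one t i <= t%:R.
Proof.
apply: le_trans (_ : \sum_(k < t) (1:R) <= _).
  by apply: ler_sum => k _; exact: It_one_le.
by rewrite sumr_const card_ord.
Qed.

Lemma Ssum_bnd K d : 0 <= d -> d < 1 -> (forall i, It K one i <= d) ->
  forall t i, Ssum one t i <= K%:R / (1 - d).
Proof.
move=> d0 d1 HK.
have d1' : 0 < 1 - d by rewrite subr_gt0.
case: K HK => [|K] HK.
  by move=> t i; have := HK i; rewrite /It /= /one => /(le_lt_trans) /(_ d1); rewrite ltxx.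
set B := _ / _.
have B0 : 0 <= B by rewrite divr_ge0 // ltW.
have KB : K.+1%:R <= B.
  rewrite /B ler_pdivlMr // -[X in _ <= X]mulr1 ler_wpM2l //.
  by rewrite lerBlDr lerDl.
move=> t; elim: t {-2}t (leqnn t) => [|m IH] t Ht i.
  by move: Ht; rewrite leqn0 => /eqP ->; rewrite /Ssum big_ord0.
case: (ltnP t K.+1) => tK.
  apply: le_trans (Ssum_one_le _ _) (le_trans _ KB).
  by rewrite ler_nat ltnW.
rewrite -(subnKC tK) Ssum_shift.
apply: le_trans (_ : K.+1%:R + B * d <= _).
  apply: lerD; first exact: Ssum_one_le.
  have H : forall j, Ssum one (t - K.+1) j <= B by move=> j; apply: IH; lia.
  apply: le_trans (@It_bnd K.+1 _ B H i) _.
  by apply: ler_wpM2l => //; exact: HK.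
rewrite le_eqVlt; apply/orP; left; apply/eqP; rewrite /B.
by field; rewrite subr_eq0 eq_sym; apply/negP => /eqP h; move: d1; rewrite h ltxx.
Qed.

Lemma Ssum_bnd_ex : (forall i, exists k, It k one i < 1) ->
  exists B, forall t i, Ssum one t i <= B.
Proof.
move=> /fin_all_exists [f Hf].
set K := (\max_(i < n) f i)%N.
set d := \big[Order.max/0]_(i < n) It K one i.
have HK : forall i, It K one i <= d by move=> i; exact: (le_bigmax (0:R) (fun i => It K one i) i).
have d0 : 0 <= d.
  rewrite /d; elim/big_ind: _ => //[x y hx hy|i _]; first by rewrite le_max hx.
  by apply: It_ge0 => j; rewrite /one.
have d1 : d < 1.
  rewrite /d; elim/big_ind: _ => //; first by move=> x y hx hy; rewrite gt_max hx hy.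
  move=> i _; apply: le_lt_trans (Hf i); apply: It_one_anti2; exact: leq_bigmax.
by exists (K%:R / (1 - d)); apply: Ssum_bnd.
Qed.

End Gen.
Arguments one {R n}.

Lemma Ssum_opp (R : realType) n (A : 'I_n -> 'I_n -> R) c t i :
  Ssum A (fun j => - c j) t i = - Ssum A c t i.
Proof. by rewrite /Ssum -sumrN; apply: eq_bigr => k _; rewrite It_opp. Qed.

Lemma Ssum_ge0 (R : realType) n (A : 'I_n -> 'I_n -> R) :
  (forall i j, 0 <= A i j) -> forall t i, 0 <= Ssum A (one) t i.
Proof. by move=> A0 t i; apply: sumr_ge0 => k _; apply: It_ge0 => // j; rewrite /one. Qed.

Lemma propagate (R : realType) n (Q P : 'I_n -> 'I_n -> R) (C : {set 'I_n})
  (c : 'I_n -> R) (B0 S : R) :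
  (forall i j, 0 <= P i j) -> (forall i, \sum_(j < n) P i j <= 1) ->
  (forall i j, i \notin C -> Q i j = P i j) ->
  0 <= B0 -> (forall t i, i \in C -> - B0 <= Ssum Q c t i) ->
  (forall t i, Ssum P (one) t i <= S) ->
  exists L, forall t i, L <= Ssum Q c t i.
Proof.
move=> P0 P1 QP B00 HC HS.
set D := \sum_(j < n) `|c j|.
have D0 : 0 <= D by apply: sumr_ge0 => j _.
have cD : forall i, - D <= c i.
  move=> i; rewrite lerNl; apply: le_trans (ler_norm _) _.
  by rewrite normrN /D (bigD1 i) //= lerDl sumr_ge0.
have claim : forall t i, - B0 - D * Ssum P (one) t i <= Ssum Q c t i.
  elim=> [|t IH] i.
    by rewrite /Ssum !big_ord0 mulr0 subr0 oppr_le0.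
  case: (boolP (i \in C)) => iC.
    apply: le_trans (HC _ _ iC); rewrite lerBlDr lerDl mulr_ge0 //.
    exact: Ssum_ge0.
  rewrite !Ssum_rec.
  have -> : PG Q (Ssum Q c t) i = PG P (Ssum Q c t) i.
    by rewrite /PG; apply: eq_bigr => j _; rewrite QP.
  have H1 := PG_mono P0 IH i.
  have E : (fun j => - B0 - D * Ssum P (one) t j) =
           (fun j => (- B0) * one j + (- D) * Ssum P (one) t j).
    by apply: funext => j; rewrite /one mulr1 mulNr.
  rewrite E PG_add PG_scal PG_scal in H1.
  have H2 : - B0 <= - B0 * PG P (one) i.
    by rewrite mulNr lerN2 ler_piMr //; exact: PG_one.
  rewrite mulrDr mulr1 opprD addrA.
  have := cD i; nra.
exists (- B0 - D * S) => t i; apply: le_trans (claim t i).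
by rewrite lerB // ler_wpM2l.
Qed.

Section Closed.
Variables (R : realType) (n : nat) (A : 'I_n -> 'I_n -> R).
Hypothesis A0 : forall i j, 0 <= A i j.
Hypothesis A1 : forall i, \sum_(j < n) A i j <= 1.

Definition closedb (X : {set 'I_n}) : bool :=
  (0 < #|X|)%N && [forall i in X, \sum_(j in X) A i j == 1].

Lemma sum_split (X : {set 'I_n}) (F : 'I_n -> R) :
  \sum_(j < n) F j = \sum_(j in X) F j + \sum_(j : 'I_n | j \notin X) F j.
Proof. by rewrite (bigID (fun j => j \in X)) /=. Qed.

Lemma closed_in (X : {set 'I_n}) i : closedb X -> i \in X -> \sum_(j in X) A i j = 1.
Proof. by move=> /andP[_ /forallP H] iX; have /implyP/(_ iX)/eqP := H i. Qed.

Lemma closed_out (X : {set 'I_n}) i j : closedb X -> i \in X -> j \notin X -> A i j = 0.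
Proof.
move=> hX iX jX.
have H : \sum_(j : 'I_n | j \notin X) A i j = 0.
  apply/eqP; rewrite eq_le sumr_ge0 // andbT.
  by have := A1 i; rewrite (sum_split X) closed_in // addrC -lerBrDr subrr.
exact: (psumr_eq0P (fun j _ => A0 i j) H).
Qed.

Lemma closed_row (X : {set 'I_n}) i : closedb X -> i \in X -> \sum_(j < n) A i j = 1.
Proof.
move=> hX iX; rewrite (sum_split X) closed_in // big1 ?addr0 // => j jX.
exact: (closed_out hX iX jX).
Qed.

Lemma closed_PG (X : {set 'I_n}) x y : closedb X -> (forall j, j \in X -> x j = y j) ->
  forall i, i \in X -> PG A x i = PG A y i.
Proof.
move=> hX H i iX; rewrite /PG (sum_split X) [RHS](sum_split X); congr (_ + _).
  by apply: eq_bigr => j jX; rewrite H.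
by rewrite !big1 // => j jX; rewrite (closed_out hX iX jX) mul0r.
Qed.

Lemma closed_It (X : {set 'I_n}) k x y : closedb X -> (forall j, j \in X -> x j = y j) ->
  forall i, i \in X -> It A k x i = It A k y i.
Proof.
move=> hX; elim: k x y => [//|k IH] x y H i iX; rewrite /It !iterS.
apply: (closed_PG hX) => // j jX; exact: IH.
Qed.

Lemma closed_one (X : {set 'I_n}) k i : closedb X -> i \in X -> It A k one i = 1.
Proof.
move=> hX; elim: k i => [//|k IH] i iX; rewrite /It iterS.
rewrite (closed_PG (y := one) hX) //; first by rewrite /PG; under eq_bigr do rewrite /one mulr1; exact: (closed_row hX iX).
Qed.

Lemma closed_exists : (exists i, exists2 eps, 0 < eps & forall k, eps <= It A k one i) ->
  exists X, closedb X.
Proof.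
move=> [i0 [eps eps0 Heps]].
set Z : {set 'I_n} := finset (fun i => `[< forall k, It A k one i = 1 >]).
have notZ : forall j, j \notin Z -> exists k, It A k one j < 1.
  move=> j; rewrite inE => /asboolPn /existsNP [k hk]; exists k.
  by rewrite lt_neqAle It_one_le // andbT; apply/eqP.
case: (posnP #|Z|) => [Z0|ZN].
  have [B HB] : exists B, forall t i, Ssum A one t i <= B.
    by apply: Ssum_bnd_ex => // i; apply: notZ; rewrite (card0_eq Z0 i).
  exfalso.
  have H : forall t, t%:R * eps <= B.
    move=> t; apply: le_trans (HB t i0); rewrite /Ssum.
    apply: le_trans (_ : \sum_(k < t) eps <= _); first by rewrite sumr_const card_ord mulr_natl.
    by apply: ler_sum => k _; exact: Heps.
  have := H (Num.trunc (B / eps)).+1; rewrite -ler_pdivlMr // => h.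
  by have := truncnS_gt (B / eps); rewrite ltNge h.
exists Z; rewrite /closedb ZN /=; apply/forallP => i; apply/implyP => iZ.
have Hi : forall k, It A k one i = 1 by move: iZ; rewrite inE => /asboolP.
have Aout : forall j, j \notin Z -> A i j = 0.
  move=> j /notZ [k hk]; apply/eqP; rewrite eq_le A0 andbT; apply/negP => /negP.
  rewrite -ltNge => Apos.
  have : It A k.+1 one i < 1.
    rewrite /It iterS -/(It A k one) /PG.
    apply: le_lt_trans (_ : \sum_(l < n) A i l - A i j * (1 - It A k one j) < _).
      set x := It A k one.
      have E : \sum_(l < n) A i l - \sum_(l < n) A i l * x l = \sum_(l < n) A i l * (1 - x l).
        by rewrite -sumrB; apply: eq_bigr => l _; rewrite mulrBr mulr1.
      have G : A i j * (1 - x j) <= \sum_(l < n) A i l * (1 - x l).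
        rewrite (bigD1 j) //= lerDl; apply: sumr_ge0 => l _; apply: mulr_ge0 => //.
        by rewrite subr_ge0; exact: It_one_le.
      lra.
    apply: lt_le_trans (A1 i); rewrite ltrBlDr ltrDl mulr_gt0 //.
    by rewrite subr_gt0.
  by rewrite Hi ltxx.
have H1 : \sum_(j < n) A i j = 1.
  by have := Hi 1%N; rewrite /It /= /PG => <-; apply: eq_bigr => j _; rewrite /one mulr1.
rewrite (sum_split Z) [X in _ + X]big1 ?addr0 in H1; first by rewrite H1.
by move=> j jZ; exact: Aout.
Qed.
Lemma poisson_sum (X : {set 'I_n}) (c h : 'I_n -> R) (g : R) : closedb X ->
  (forall i, i \in X -> h i + g = c i + PG A h i) ->
  forall t i, i \in X -> Ssum A c t i = t%:R * g + h i - It A t h i.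
Proof.
move=> hX Hp; elim=> [|t IH] i iX; first by rewrite /Ssum big_ord0 mul0r add0r subrr.
rewrite /Ssum big_ord_recr /= -/(Ssum A c t i) IH //.
have -> : It A t c i = It A t (fun j => (h j + g * one j) - PG A h j) i.
  apply: (closed_It t hX _ iX) => j jX; rewrite /one mulr1; have := Hp j jX; lra.
rewrite It_sub It_add It_scal (closed_one _ hX iX).
have -> : It A t (PG A h) i = PG A (It A t h) i by rewrite /It -iterSr iterS.
rewrite -[in RHS](addn1 t) natrD; lra.
Qed.

Lemma It_abs_bnd (h : 'I_n -> R) t i : `|It A t h i| <= \sum_(j < n) `|h j|.
Proof.
set H := \sum_(j < n) `|h j|.
have hH : forall j, `|h j| <= H by move=> j; rewrite /H (bigD1 j) //= lerDl sumr_ge0.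
have H0 : 0 <= H by rewrite /H sumr_ge0.
have o1 := It_one_le A0 A1 t i.
have o0 : 0 <= It A t one i by apply: It_ge0 => // j; rewrite /one.
rewrite ler_norml; apply/andP; split.
  have E : - It A t h i = It A t (fun j => - h j) i by rewrite It_opp.
  have h1 : forall j, - h j <= H by move=> j; apply: le_trans (ler_norm _) _; rewrite normrN.
  rewrite lerNl E; apply: le_trans (It_bnd A0 t h1 i) _.
  by rewrite -[X in _ <= X]mulr1 ler_wpM2l.
have h1 : forall j, h j <= H by move=> j; apply: le_trans (ler_norm _) _.
apply: le_trans (It_bnd A0 t h1 i) _.
by rewrite -[X in _ <= X]mulr1 ler_wpM2l.
Qed.

Lemma closed_min : (exists X, closedb X) ->
  exists C, closedb C /\ forall Y, closedb Y -> Y \subset C -> Y = C.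
Proof.
move=> [X hX].
have exP : exists m, [exists Y : {set 'I_n}, closedb Y && (#|Y| == m)].
  by exists #|X|; apply/existsP; exists X; rewrite hX eqxx.
case: (ex_minnP exP) => m /existsP [C /andP [hC /eqP cC]] hmin.
exists C; split => // Y hY sub; apply/eqP; rewrite eqEcard sub /= cC.
by apply: hmin; apply/existsP; exists Y; rewrite hY eqxx.
Qed.

End Closed.

Section Poisson.
Variables (R : realType) (n : nat) (A : 'I_n -> 'I_n -> R).
Hypothesis A0 : forall i j, 0 <= A i j.
Hypothesis A1 : forall i, \sum_(j < n) A i j <= 1.
Variable C : {set 'I_n}.
Hypothesis hC : closedb A C.
Hypothesis hmin : forall Y, closedb A Y -> Y \subset C -> Y = C.

Definition Mx : 'M[R]_n := \matrix_(i, j) ((i == j)%:R - (i \in C)%:R * A i j).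

Lemma kerM (w : 'rV[R]_n) j : (w *m Mx) 0 j = w 0 j - \sum_(i in C) w 0 i * A i j.
Proof.
rewrite !mxE; under eq_bigr do rewrite mxE mulrBr; rewrite sumrB; congr (_ - _).
  rewrite (bigD1 j) //= eqxx mulr1 big1 ?addr0 // => i /negbTE ->; by rewrite mulr0.
rewrite [RHS]big_mkcond /=; apply: eq_bigr => i _.
by case: (i \in C); rewrite ?mul1r ?mul0r ?mulr0.
Qed.

Lemma stat (w : 'rV[R]_n) : w *m Mx = 0 -> forall j, w 0 j = \sum_(i in C) w 0 i * A i j.
Proof. by move=> H j; apply/eqP; rewrite -subr_eq0 -kerM H mxE. Qed.

Lemma stat_out (w : 'rV[R]_n) : w *m Mx = 0 -> forall j, j \notin C -> w 0 j = 0.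
Proof.
move=> H j jC; rewrite (stat H) big1 // => i iC.
by rewrite (closed_out A0 A1 hC iC jC) mulr0.
Qed.

Lemma stat_inv (w : 'rV[R]_n) : (forall j, w 0 j = \sum_(i in C) w 0 i * A i j) -> w *m Mx = 0.
Proof. by move=> H; apply/rowP => j; rewrite kerM mxE -H subrr. Qed.

Lemma stat_abs (w : 'rV[R]_n) : w *m Mx = 0 -> (\row_j `|w 0 j|) *m Mx = 0.
Proof.
move=> H; apply: stat_inv => j; rewrite mxE; under eq_bigr do rewrite mxE.
set a := fun j => `|w 0 j|.
set r := fun j => \sum_(i in C) a i * A i j.
have le : forall j, a j <= r j.
  move=> k; rewrite /a (stat H k); apply: le_trans (ler_norm_sum _ _ _) _.
  by apply: ler_sum => i _; rewrite normrM (ger0_norm (A0 _ _)).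
have sr : \sum_(k < n) r k = \sum_(k < n) a k.
  rewrite /r exchange_big /= (sum_split C) [X in _ = _ + X]big1 ?addr0; last first.
    by move=> k kC; rewrite /a (stat_out H kC) normr0.
  apply: eq_bigr => i iC; rewrite -mulr_sumr (closed_row A0 A1 hC iC) mulr1 //.
have E : \sum_(k < n) (r k - a k) = 0 by rewrite sumrB sr subrr.
have := @psumr_eq0P _ _ (fun _ => true) (fun k => r k - a k) (fun k _ => (ltac:(by rewrite subr_ge0))) E j isT.
by move/eqP; rewrite subr_eq0 => /eqP.
Qed.

Lemma stat_full (w : 'rV[R]_n) : w *m Mx = 0 -> w != 0 -> forall j, j \in C -> w 0 j != 0.
Proof.
move=> H w0.
set Y : {set 'I_n} := finset (fun j => w 0 j != 0).
have YC : Y \subset C.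
  apply/fintype.subsetP => j; rewrite inE; apply: contraR => jC; by rewrite (stat_out H jC).
have Habs := stat (stat_abs H).
have hY : closedb A Y.
  apply/andP; split.
    apply/card_gt0P; apply/existsP; apply: contraR w0 => /existsPn Hn.
    apply/eqP/rowP => j; rewrite mxE; have := Hn j; rewrite inE => /negPn /eqP //.
  apply/forallP => i; apply/implyP => iY.
  have iC : i \in C by apply: (fintype.subsetP YC).
  have Aout : forall j, j \notin Y -> A i j = 0.
    move=> j jY; apply/eqP; rewrite eq_le A0 andbT.
    have := Habs j; rewrite !mxE; move: jY; rewrite inE => /negPn /eqP ->.
    rewrite normr0; under eq_bigr do rewrite mxE.
    rewrite (bigD1 i) //= => /esym/eqP.
    have g1 : 0 <= `|w 0 i| * A i j by apply: mulr_ge0.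
    have g2 : 0 <= \sum_(k in C | k != i) `|w 0 k| * A k j.
      by apply: sumr_ge0 => k _; apply: mulr_ge0.
    rewrite paddr_eq0 // => /andP [/eqP h _].
    have wi : `|w 0 i| != 0 by rewrite normr_eq0; move: iY; rewrite inE.
    by move/eqP: h; rewrite mulf_eq0 (negbTE wi) /= => /eqP ->.
  apply/eqP; rewrite -(closed_row A0 A1 hC iC) (sum_split Y) [X in _ = _ + X]big1 ?addr0 //.
have := hmin hY YC => YCeq j jC; move: jC; rewrite -YCeq inE //.
Qed.

Lemma poisson (c : 'I_n -> R) :
  exists g : R, exists h : 'I_n -> R, forall i, i \in C -> h i + g = c i + PG A h i.
Proof.
have [i0 i0C] : exists i0, i0 \in C by apply/card_gt0P; case/andP: hC.
set v1 : 'rV[R]_n := \row_j ((j \in C)%:R).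
have v1M : v1 *m Mx^T = 0.
  apply/rowP => i; rewrite !mxE; under eq_bigr do rewrite !mxE.
  under eq_bigr do rewrite mulrBr.
  rewrite sumrB (bigD1 i) //= eqxx mulr1 big1 ?addr0; last first.
    by move=> j; rewrite eq_sym => /negbTE ->; rewrite mulr0.
  case: (boolP (i \in C)) => iC; last first.
    by rewrite big1 ?subrr // => j _; rewrite mul0r mulr0.
  have t1 : (true%:R : R) = 1 by [].
  rewrite !t1; under eq_bigr do rewrite mul1r.
  have -> : \sum_(j < n) (j \in C)%:R * A i j = 1.
    rewrite -[RHS](closed_in hC iC) [RHS]big_mkcond /=; apply: eq_bigr => j _.
    by case: (j \in C); rewrite ?t1 ?mul1r ?mul0r.
  by rewrite subrr.
have t1 : (true%:R : R) = 1 by [].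
have /det0P [w w0 wM] : \det Mx == 0.
  rewrite -det_tr; apply/det0P; exists v1 => //.
  by apply/negP => /eqP /rowP /(_ i0); rewrite !mxE i0C t1 => /eqP; rewrite oner_eq0.
set rho : 'rV[R]_n := \row_j `|w 0 j|.
have rhoM : rho *m Mx = 0 := stat_abs wM.
have rho0 : rho != 0.
  apply/negP=> /eqP/rowP/(_ i0); rewrite !mxE => /eqP; rewrite normr_eq0; apply/negP.
  exact: stat_full wM w0 i0 i0C.
have rhoi0 : rho 0 i0 != 0 := stat_full rhoM rho0 i0C.
have kerS : (kermx Mx <= rho)%MS.
  apply/row_subP => k; set u := row k (kermx Mx).
  have uM : u *m Mx = 0 by rewrite /u -row_mul mulmx_ker row0.
  set a := u 0 i0 / rho 0 i0.
  have u'M : (u - a *: rho) *m Mx = 0 by rewrite mulmxBl -scalemxAl uM rhoM scaler0 subrr.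
  have u'0 : u - a *: rho = 0.
    apply/eqP; apply: contraT => hne; have := stat_full u'M hne i0C.
    rewrite [X in X != 0]mxE.
    have -> : (- (a *: rho)) 0 i0 = - (a * rho 0 i0) by rewrite !mxE.
    by rewrite /a divfK // subrr eqxx.
  have -> : u = a *: rho by apply/eqP; rewrite -subr_eq0 u'0.
  exact: scalemx_sub (submx_refl _).
have rk1 : (n - \rank Mx <= 1)%N.
  by rewrite -mxrank_ker; apply: leq_trans (mxrankS kerS) (rank_leq_row _).
have rkrho : \rank rho = 1%N.
  by apply/eqP; rewrite eqn_leq rank_leq_row lt0n mxrank_eq0 rho0.
set Ker := kermx rho^T.
have NK : (Mx^T <= Ker)%MS by apply/sub_kermxP; rewrite -trmx_mul rhoM trmx0.
have rkK : \rank Ker = (n - 1)%N by rewrite mxrank_ker mxrank_tr rkrho.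
have KN : (Ker <= Mx^T)%MS.
  have [le <-] := mxrank_leqif_sup NK.
  move: le; rewrite mxrank_tr rkK => le; apply/eqP; lia.
have rhoe : forall j, rho 0 j = `|w 0 j| by move=> j; rewrite mxE.
have rho_out : forall j, j \notin C -> rho 0 j = 0 by move=> j jC; exact: (stat_out rhoM jC).
set sr := \sum_(j < n) rho 0 j.
have sr0 : 0 < sr.
  have r0 : 0 < rho 0 i0 by rewrite lt_neqAle eq_sym rhoi0 /= rhoe normr_ge0.
  rewrite /sr (bigD1 i0) //=; apply: (lt_le_trans r0); rewrite lerDl.
  by apply: sumr_ge0 => j _; rewrite rhoe.
set g := (\sum_(j < n) rho 0 j * c j) / sr.
set b : 'rV[R]_n := \row_i ((i \in C)%:R * (c i - g)).
have bK : (b <= Ker)%MS.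
  apply/sub_kermxP; apply/matrixP => p q; rewrite !mxE.
  under eq_bigr do rewrite !mxE.
  have E : forall j : 'I_n, (j \in C)%:R * (c j - g) * rho 0 j = rho 0 j * c j - g * rho 0 j.
    move=> j; case: (boolP (j \in C)) => jC; first by rewrite t1 mul1r; ring.
    by rewrite rho_out // mulr0 mul0r mulr0 subrr.
  have E2 : forall j : 'I_n, (j \in C)%:R * (c j - g) * `|w 0 j| = rho 0 j * c j - g * rho 0 j.
    by move=> j; rewrite -E rhoe.
  under eq_bigr do rewrite E2.
  rewrite sumrB -mulr_sumr -/sr /g divfK ?subrr // gt_eqF //.
have [D hD] : exists D, b = D *m Mx^T by apply/submxP; exact: submx_trans bK KN.
exists g, (fun j => D 0 j) => i iC.
have := congr1 (fun m : 'rV[R]_n => m 0 i) hD; rewrite /= !mxE iC t1 mul1r.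
under eq_bigr do rewrite !mxE iC t1 mul1r mulrBr.
rewrite sumrB (bigD1 i) //= eqxx mulr1 big1 ?addr0; last first.
  by move=> j; rewrite eq_sym => /negbTE ->; rewrite mulr0.
move=> E; rewrite /PG.
have E3 : \sum_(j < n) A i j * D 0 j = \sum_(j < n) D 0 j * A i j.
  by apply: eq_bigr => j _; rewrite mulrC.
rewrite E3; lra.
Qed.
End Poisson.

Lemma sum_opt (R : numDomainType) n (F : option 'I_n -> R) :
  \sum_(o : option 'I_n) F o = F None + \sum_(j < n) F (Some j).
Proof.
rewrite (bigD1 None) //=; congr (_ + _).
rewrite (reindex_omap Some id) //=; last by case.
by apply: eq_bigl => j /=; rewrite eqxx.
Qed.

Lemma closedb_ext (R : realType) n (A B : 'I_n -> 'I_n -> R) (X : {set 'I_n}) :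
  (forall i j, i \in X -> A i j = B i j) -> closedb A X = closedb B X.
Proof.
move=> E; rewrite /closedb; congr (_ && _); apply: eq_forallb => i.
case: (boolP (i \in X)) => //= iX; congr (_ == _); apply: eq_bigr => j _; exact: E.
Qed.

Lemma closed_Ssum_ext (R : realType) n (A B : 'I_n -> 'I_n -> R) (X : {set 'I_n}) c c' :
  (forall i j, 0 <= A i j) -> (forall i, \sum_(j < n) A i j <= 1) -> closedb A X ->
  (forall i j, i \in X -> A i j = B i j) -> (forall i, i \in X -> c i = c' i) ->
  forall t i, i \in X -> Ssum A c t i = Ssum B c' t i.
Proof.
move=> A0 A1 hX E cE.
have It_ext : forall k i, i \in X -> It A k c i = It B k c' i.
  elim=> [|k IH] i iX; first by rewrite /It /= cE.
  rewrite /It !iterS -/(It A k c) -/(It B k c').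
  rewrite (closed_PG A0 A1 (y := It B k c') hX) //.
  by rewrite /PG; apply: eq_bigr => j _; rewrite E.
by move=> t i iX; apply: eq_bigr => k _; exact: It_ext.
Qed.

Lemma notprol_lt (R : realType) n (A : 'I_n -> 'I_n -> R) :
  ~ (exists i, exists2 eps, 0 < eps & forall k, eps <= It A k one i) ->
  forall i eps, 0 < eps -> exists k, It A k one i < eps.
Proof.
move=> np i eps e0; case: (pselect (exists k, It A k one i < eps)) => // hn.
exfalso; apply: np; exists i; exists eps => // k; rewrite leNgt; apply/negP => hk.
by apply: hn; exists k.
Qed.

Lemma limn_einf_eq (R : realType) (u : (\bar R)^nat) :
  limn_einf u = ereal_sup (range (einfs u)).
Proof. by rewrite limn_einf_lim; apply: cvg_lim => //; exact: cvg_einfs_sup. Qed.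

Lemma einf_ge (R : realType) (u : (\bar R)^nat) (b : R) :
  (forall k, (b%:E <= u k)%E) -> (b%:E <= limn_einf u)%E.
Proof.
move=> H; rewrite limn_einf_eq; apply: le_ereal_sup_tmp; exists (einfs u 0%N) => //.
apply: le_ereal_inf_tmp => _ [k _ <-]; exact: H.
Qed.

Lemma einf_le (R : realType) (u : (\bar R)^nat) (b : R) :
  (forall k, (u k <= b%:E)%E) -> (limn_einf u <= b%:E)%E.
Proof.
move=> H; rewrite limn_einf_eq; apply: ge_ereal_sup => _ [m _ <-].
apply: ge_ereal_inf; exists (u m); last exact: H.
by exists m => //=; rewrite /= leqnn.
Qed.

Section GameS.
Local Unset Implicit Arguments.
Variables (R : realType) (n : nat) (U V : 'I_n -> Type)
  (Ubar : forall i, classical_sets.set (U i)) (Vbar : forall i, classical_sets.set (V i))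
  (c : forall i, U i -> V i -> R)
  (p : forall i, U i -> V i -> option 'I_n -> R).
Local Set Implicit Arguments.
Hypothesis p_prob : forall i u v, Ubar i u -> Vbar i v ->
     (forall j, 0 <= p i u v j) /\ \sum_(j : option 'I_n) p i u v j = 1.

Lemma Pm0 mu nu : Pi1SD Ubar mu -> Pi2SD Vbar nu -> forall i j, 0 <= Pm p mu nu i j.
Proof. by move=> hmu hnu i j; have [h _] := p_prob (hmu i) (hnu i); exact: h. Qed.

Lemma Pm1 mu nu : Pi1SD Ubar mu -> Pi2SD Vbar nu -> forall i, \sum_(j < n) Pm p mu nu i j <= 1.
Proof.
move=> hmu hnu i; have [h1 h2] := p_prob (hmu i) (hnu i).
by rewrite -h2 sum_opt lerDr.
Qed.

Lemma cost_eq mu nu i :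
  cost c p mu nu i = limn_einf (fun t => (Ssum (Pm p mu nu) (cvec c mu nu) t.+1 i)%:E).
Proof. by []. Qed.

Lemma prol_eq mu nu : prolonging p mu nu =
  (exists i, exists2 eps, 0 < eps & forall k, eps <= It (Pm p mu nu) k one i).
Proof. by []. Qed.

Lemma part1 mu nu : ess_proper1 Ubar Vbar c p mu -> ess_proper2 Ubar Vbar c p nu ->
  ~ prolonging p mu nu.
Proof.
move=> [hmu [[nu' hnu' np'] H1]] [hnu [[mu' hmu' np''] H2]] prol.
set P := Pm p mu nu.
have P0 := Pm0 hmu hnu; have P1 := Pm1 hmu hnu.
have [X hX] := closed_exists P0 P1 prol.
have [C [hC hmin]] := closed_min (ex_intro _ X hX).
have [g [h Hp]] := poisson P0 P1 hC hmin (cvec c mu nu).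
set H := \sum_(j < n) `|h j|.
have Sform := poisson_sum P0 P1 hC Hp.
have bnd : forall t i, `|It P t h i| <= H by move=> t i; exact: It_abs_bnd.
have [i0 i0C] : exists i0, i0 \in C by apply/card_gt0P; case/andP: hC.
have H0 : 0 <= H by rewrite /H sumr_ge0.
case: (lerP 0 g) => g0.
- set nuC := fun i => if i \in C then nu i else nu' i.
  have hnuC : Pi2SD Vbar nuC by move=> i; rewrite /nuC; case: (i \in C).
  set Q := Pm p mu nuC.
  have QP : forall i j, i \in C -> P i j = Q i j by move=> i j iC; rewrite /P /Q /Pm /nuC iC.
  have Q0 := Pm0 hmu hnuC; have Q1 := Pm1 hmu hnuC.
  have hCQ : closedb Q C by rewrite -(closedb_ext QP).
  have prolQ : prolonging p mu nuC.
    rewrite prol_eq; exists i0; exists 1 => // k; rewrite (closed_one Q0 Q1 _ hCQ i0C) //.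
  have [i1 hi1] := H1 nuC hnuC prolQ.
  have QS : forall t i, i \in C -> - (2 * H) <= Ssum Q (cvec c mu nuC) t i.
    move=> t i iC; rewrite -(closed_Ssum_ext (c := cvec c mu nu) P0 P1 hC QP) //; last first.
      by move=> j jC; rewrite /cvec /nuC jC.
    rewrite Sform //; have := bnd t i; rewrite ler_norml => /andP [_ hb].
    have : 0 <= t%:R * g by rewrite mulr_ge0.
    have := normr_ge0 (h i); have := ler_norm (h i); have : `|h i| <= H.
      by rewrite /H (bigD1 i) //= lerDl sumr_ge0.
    rewrite ler_norml; lra.
  set P' := Pm p mu nu'.
  have P'0 := Pm0 hmu hnu'; have P'1 := Pm1 hmu hnu'.
  have [S HS] : exists S, forall t i, Ssum P' one t i <= S.
    apply: (Ssum_bnd_ex P'0 P'1) => i; apply: (notprol_lt np') => //.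
  have QP' : forall i j, i \notin C -> Q i j = P' i j.
    by move=> i j iC; rewrite /Q /P' /Pm /nuC (negbTE iC).
  have B0 : 0 <= 2 * H by rewrite mulr_ge0.
  have [L HL] := propagate P'0 P'1 QP' B0 QS HS.
  have := einf_ge (u := fun t => (Ssum Q (cvec c mu nuC) t.+1 i1)%:E) (b := L).
  rewrite -cost_eq hi1 => hh; have := hh (fun k => ltac:(rewrite lee_fin; exact: HL)).
  by rewrite leeNy_eq.
- set muC := fun i => if i \in C then mu i else mu' i.
  have hmuC : Pi1SD Ubar muC by move=> i; rewrite /muC; case: (i \in C).
  set Q := Pm p muC nu.
  have QP : forall i j, i \in C -> P i j = Q i j by move=> i j iC; rewrite /P /Q /Pm /muC iC.
  have Q0 := Pm0 hmuC hnu; have Q1 := Pm1 hmuC hnu.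
  have hCQ : closedb Q C by rewrite -(closedb_ext QP).
  have prolQ : prolonging p muC nu.
    rewrite prol_eq; exists i0; exists 1 => // k; rewrite (closed_one Q0 Q1 _ hCQ i0C) //.
  have [i1 hi1] := H2 muC hmuC prolQ.
  have QS : forall t i, i \in C -> - (2 * H) <= Ssum Q (fun j => - cvec c muC nu j) t i.
    move=> t i iC; rewrite Ssum_opp lerN2.
    rewrite -(closed_Ssum_ext (c := cvec c mu nu) P0 P1 hC QP) //; last first.
      by move=> j jC; rewrite /cvec /muC jC.
    rewrite Sform //; have := bnd t i; rewrite ler_norml => /andP [hb _].
    have : t%:R * g <= 0 by rewrite mulr_ge0_le0 // ltW.
    have := normr_ge0 (h i); have := ler_norm (h i); have : `|h i| <= H.
      by rewrite /H (bigD1 i) //= lerDl sumr_ge0.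
    rewrite ler_norml; lra.
  set P' := Pm p mu' nu.
  have P'0 := Pm0 hmu' hnu; have P'1 := Pm1 hmu' hnu.
  have [S HS] : exists S, forall t i, Ssum P' one t i <= S.
    apply: (Ssum_bnd_ex P'0 P'1) => i; apply: (notprol_lt np'') => //.
  have QP' : forall i j, i \notin C -> Q i j = P' i j.
    by move=> i j iC; rewrite /Q /P' /Pm /muC (negbTE iC).
  have B0 : 0 <= 2 * H by rewrite mulr_ge0.
  have [L HL] := propagate P'0 P'1 QP' B0 QS HS.
  have := einf_le (u := fun t => (Ssum Q (cvec c muC nu) t.+1 i1)%:E) (b := - L).
  rewrite -cost_eq hi1 => hh.
  have : (+oo <= (- L)%:E)%E.
    apply: hh => k; rewrite lee_fin.
    by have := HL k.+1 i1; rewrite Ssum_opp lerNr.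
  by rewrite leye_eq.
Qed.

Lemma part2 mu nu : Pi1SD Ubar mu -> Pi2SD Vbar nu -> ~ prolonging p mu nu ->
  forall xbar xtil : 'I_n -> R,
     (forall i, (xbar i)%:E = Tmu Vbar c p mu xbar i) ->
     (forall i, (xtil i)%:E = Tnu Ubar c p nu xtil i) ->
     forall i, xtil i <= xbar i.
Proof.
move=> hmu hnu np xbar xtil Hb Ht.
set P := Pm p mu nu.
have P0 := Pm0 hmu hnu; have P1 := Pm1 hmu hnu.
have hb : forall i, Tmn c p mu nu xbar i <= xbar i.
  by move=> i; rewrite -lee_fin Hb; apply: ereal_sup_ubound; exists nu.
have ht : forall i, xtil i <= Tmn c p mu nu xtil i.
  by move=> i; rewrite -lee_fin Ht; apply: ereal_inf_lbound; exists mu.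
set d := fun j => xtil j - xbar j.
have dP : forall i, d i <= PG P d i.
  move=> i; have E : PG P d i = PG P xtil i - PG P xbar i.
    by rewrite /PG -sumrB; apply: eq_bigr => j _; rewrite /d mulrBr.
  have := hb i; have := ht i; rewrite /Tmn.
  change (Pop p mu nu xbar i) with (PG P xbar i).
  change (Pop p mu nu xtil i) with (PG P xtil i).
  rewrite E /d; lra.
have dk : forall k i, d i <= It P k d i.
  elim => // k IH i; apply: le_trans (IH i) _; rewrite /It iterSr.
  by apply: It_mono => //; exact: dP.
set m := \sum_(j < n) `|d j|.
have m0 : 0 <= m by rewrite /m sumr_ge0.
have hdm : forall j, d j <= m.
  move=> j; apply: le_trans (ler_norm _) _.
  by rewrite /m (bigD1 j) //= lerDl sumr_ge0.
have dm : forall k i, d i <= m * It P k one i.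
  by move=> k i; apply: le_trans (dk k i) (It_bnd P0 k hdm i).
move=> i; rewrite leNgt; apply/negP => hlt.
have di : 0 < d i by rewrite /d subr_gt0.
set eps := d i / (m + 1).
have m1 : 0 < m + 1 by rewrite ltr_wpDl.
have e0 : 0 < eps by rewrite divr_gt0.
have [k hk] := notprol_lt np i e0.
have me : m * eps = d i - eps by rewrite /eps; field; rewrite gt_eqF.
have := dm k i; have : m * It P k one i <= m * eps by rewrite ler_wpM2l // ltW.
lra.
Qed.

End GameS.

Unset Implicit Arguments.

Theorem lemma2p2 (R : realType) (n : nat)
  (U V : 'I_n -> completePseudoMetricType R)
  (Ubar : forall i, set (U i)) (Vbar : forall i, set (V i))
  (c : forall i, U i -> V i -> R)
  (p : forall i, U i -> V i -> option 'I_n -> R)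
  (hU : forall i, hausdorff_space (U i)) (hV : forall i, hausdorff_space (V i))
  (sU : forall i, separable_space (U i)) (sV : forall i, separable_space (V i))
  (cU : forall i, compact (Ubar i)) (cV : forall i, compact (Vbar i))
  (p_prob : forall i u v, Ubar i u -> Vbar i v ->
     (forall j, 0 <= p i u v j) /\ \sum_(j : option 'I_n) p i u v j = 1)
  (p_cont : forall i j : 'I_n,
     {within Ubar i `*` Vbar i, continuous (fun uv => p i uv.1 uv.2 (Some j))})
  (c_lsc : forall i v, Vbar i v -> lsc_on (Ubar i) (fun u => c i u v))
  (c_usc : forall i u, Ubar i u -> usc_on (Vbar i) (fun v => c i u v))
  (mu : forall i, U i) (nu : forall i, V i) :
  ess_proper1 Ubar Vbar c p mu -> ess_proper2 Ubar Vbar c p nu ->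
  ~ prolonging p mu nu /\
  (forall xbar xtil : 'I_n -> R,
     (forall i, (xbar i)%:E = Tmu Vbar c p mu xbar i) ->
     (forall i, (xtil i)%:E = Tnu Ubar c p nu xtil i) ->
     forall i, xtil i <= xbar i).
Proof.
move=> e1 e2.
have np := part1 p_prob e1 e2.
split => //.
case: e1 => hmu _; case: e2 => hnu _.
move=> xb xt Hb Ht i.
exact: (part2 p_prob hmu hnu np Hb Ht).
Qed.
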